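(* Let $l<u$ be real, $D=[l,u]$, $b>0$, and for $p\in D$ let $C_p = 1-\frac{1}{2}\left(e^{-\frac{p-l}{b}}+e^{-\frac{u-p}{b}}\right)$. Let $z\ge 0$. Then for all $q$ with $q\in D$ and $q+z\in D$ (and $q$ in the interior of the set of such points, so that the derivative is taken there), $$\frac{\partial}{\partial q}\left(\frac{C_{q+z}}{C_q}e^{\frac{z}{b}}\right)\le 0.$$
   Context: $C_p$ equals $\int_l^u \frac{1}{2b}e^{-|x-p|/b}\,dx$ for $p\in D$. *)

(* Defs.v *)
From Stdlib Require Import Reals Lra.
Open Scope R_scope.

Definition Cfun (l u b p : R) : R :=
  1 - / 2 * (exp (- ((p - l) / b)) + exp (- ((u - p) / b))).

Definition ratio_fun (l u b z : R) (q : R) : R :=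
  Cfun l u b (q + z) / Cfun l u b q * exp (z / b).

(* Main.v *)
Require Import Defs.
From Stdlib Require Import Reals.
From Stdlib Require Import Lra.
From Coquelicot Require Import Coquelicot.
Open Scope R_scope.

Theorem lemmaA2 (l u b z : R) (hlu : l < u) (hb : 0 < b) (hz : 0 <= z) :
  forall q : R, l < q -> q + z < u ->
    exists d : R, derivable_pt_lim (ratio_fun l u b z) q d /\ d <= 0.
Proof.
  intros q hq hqz.
  set (ea := exp (- ((q + - l) * / b))).
  set (ec := exp (- ((u + - q) * / b))).
  set (tt := exp (z / b)).
  assert (ha0 : 0 < ea) by apply exp_pos.
  assert (hc0 : 0 < ec) by apply exp_pos.
  assert (ha1 : ea < 1).
  { unfold ea. rewrite <- exp_0. apply exp_increasing.
    assert (0 < (q + - l) * / b) by (apply Rmult_lt_0_compat; [lra|apply Rinv_0_lt_compat; lra]). lra. }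
  assert (hc1 : ec < 1).
  { unfold ec. rewrite <- exp_0. apply exp_increasing.
    assert (0 < (u + - q) * / b) by (apply Rmult_lt_0_compat; [lra|apply Rinv_0_lt_compat; lra]). lra. }
  assert (ht1 : 1 <= tt).
  { unfold tt. rewrite <- exp_0. destruct (Req_dec z 0) as [->|Hz].
    - right. f_equal. unfold Rdiv. ring.
    - left. apply exp_increasing. unfold Rdiv. apply Rmult_lt_0_compat; [lra|apply Rinv_0_lt_compat; lra]. }
  assert (hC : 1 + - (/ 2 * (ea + ec)) <> 0) by lra.
  assert (E1 : exp (- ((q + z + - l) * / b)) = ea / tt).
  { unfold ea, tt. unfold Rdiv. rewrite <- exp_Ropp, <- exp_plus. f_equal. field. lra. }
  assert (E2 : exp (- ((u + - (q + z)) * / b)) = ec * tt).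
  { unfold ec, tt. rewrite <- exp_plus. f_equal. field. lra. }
  assert (H : is_derive (ratio_fun l u b z) q
    (tt / (2 * b * (1 + - (/ 2 * (ea + ec)))^2) *
     ((ea / tt - ec * tt) * (1 + - (/ 2 * (ea + ec))) - (1 + - (/ 2 * (ea / tt + ec * tt))) * (ea - ec)))).
  { unfold ratio_fun, Cfun. auto_derive.
    - fold ea ec. exact hC.
    - fold ea ec tt. rewrite E1, E2. field. lra. }
  eexists. split.
  - apply is_derive_Reals. exact H.
  - assert (X : (ea / tt - ec * tt) * (1 + - (/ 2 * (ea + ec))) - (1 + - (/ 2 * (ea / tt + ec * tt))) * (ea - ec)
              = - ((tt - 1) / tt * (ea * (1 - ec) + ec * tt * (1 - ea)))) by (field; lra).
    rewrite X.
    assert (0 <= (tt - 1) / tt * (ea * (1 - ec) + ec * tt * (1 - ea))).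
    { apply Rmult_le_pos.
      - unfold Rdiv. apply Rmult_le_pos; [lra|]. left; apply Rinv_0_lt_compat; lra.
      - assert (0 <= ea * (1 - ec)) by (apply Rmult_le_pos; lra).
        assert (0 <= ec * tt * (1 - ea)) by (apply Rmult_le_pos; [apply Rmult_le_pos|]; lra).
        lra. }
    assert (0 <= tt / (2 * b * (1 + - (/ 2 * (ea + ec)))^2)).
    { unfold Rdiv. apply Rmult_le_pos; [lra|]. left. apply Rinv_0_lt_compat.
      apply Rmult_lt_0_compat; [lra|]. apply pow_lt. lra. }
    nra.
Qed.
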